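(* (Setting as in the context.) Let $\tau>0$ and let $\{(u^k,y^k,v^k,z^k,x^k)\}$ be generated by Algorithm SCB-SPADMM. Then for every $k\ge0$, $(u^{k+1},y^{k+1},v^{k+1},z^{k+1},x^{k+1})$ can be generated exactly by $$(u^{k+1},y^{k+1})=\operatorname{argmin}_{u,y}\ \mathcal L_\sigma(u,y,v^k,z^k;x^k)+\tfrac\sigma2\|(u,y_{\le p-1})-(u^k,y^k_{\le p-1})\|^2_{\widehat{\mathcal T}_{f_p}}+\tfrac\sigma2\|y_p-y_p^k\|^2_{\mathcal T_{\theta_p}},$$ $$(v^{k+1},z^{k+1})=\operatorname{argmin}_{v,z}\ \mathcal L_\sigma(u^{k+1},y^{k+1},v,z;x^k)+\tfrac\sigma2\|(v,z_{\le q-1})-(v^k,z^k_{\le q-1})\|^2_{\widehat{\mathcal T}_{g_q}}+\tfrac\sigma2\|z_q-z_q^k\|^2_{\mathcal T_{\varphi_q}},$$ $$x^{k+1}=x^k+\tau\sigma(\mathcal F^*u^{k+1}+\mathcal A^*y^{k+1}+\mathcal G^*v^{k+1}+\mathcal B^*z^{k+1}-c).$$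
   Context: Let $p,q\ge1$ be integers, $\mathcal U,\mathcal V,\mathcal X,\mathcal Y_i,\mathcal Z_j$ real finite-dimensional Euclidean spaces, $\mathcal Y=\prod_i\mathcal Y_i$, $\mathcal Z=\prod_j\mathcal Z_j$; $f,g$ closed proper convex on $\mathcal U,\mathcal V$; $\mathcal F:\mathcal X\to\mathcal U$, $\mathcal G:\mathcal X\to\mathcal V$, $\mathcal A_i:\mathcal X\to\mathcal Y_i$, $\mathcal B_j:\mathcal X\to\mathcal Z_j$ linear; $c\in\mathcal X$; $\theta_i(y_i)=\frac12\langle y_i,\mathcal P_iy_i\rangle-\langle b_i,y_i\rangle$, $\varphi_j(z_j)=\frac12\langle z_j,\mathcal Q_jz_j\rangle-\langle d_j,z_j\rangle$ with $\mathcal P_i,\mathcal Q_j$ self-adjoint positive semidefinite. $\mathcal A^*y=\sum_i\mathcal A_i^*y_i$, $\mathcal B^*z=\sum_j\mathcal B_j^*z_j$, $\Gamma(u,y,v,z)=\mathcal F^*u+\mathcal A^*y+\mathcal G^*v+\mathcal B^*z-c$, $\sigma>0$, $\mathcal L_\sigma(u,y,v,z;x)=f(u)+\sum\theta_i(y_i)+g(v)+\sum\varphi_j(z_j)+\langle x,\Gamma\rangle+\frac\sigma2\|\Gamma\|^2$. $\mathcal E_{\theta_i}\succ0$ self-adjoint with $\mathcal E_{\theta_i}\succeq\sigma^{-1}\mathcal P_i+\mathcal A_i\mathcal A_i^*$, $\mathcal T_{\theta_i}:=\mathcal E_{\theta_i}-\sigma^{-1}\mathcal P_i-\mathcal A_i\mathcal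 A_i^*$; $\mathcal E_{\varphi_j}\succ0$ self-adjoint with $\mathcal E_{\varphi_j}\succeq\sigma^{-1}\mathcal Q_j+\mathcal B_j\mathcal B_j^*$, $\mathcal T_{\varphi_j}:=\mathcal E_{\varphi_j}-\sigma^{-1}\mathcal Q_j-\mathcal B_j\mathcal B_j^*$. $\mathcal T_f,\mathcal T_g$ self-adjoint positive semidefinite on $\mathcal U,\mathcal V$. Notation $y_{\le i},y_{\ge i},z_{\le j},z_{\ge j}$ for sub-tuples (empty if out of range), $\|w\|^2_{\mathcal T}=\langle w,\mathcal Tw\rangle$. $\mathcal F_1:=\mathcal F$, $\mathcal F_{i+1}x:=(\mathcal Fx,\mathcal A_1x,\dots,\mathcal A_ix)$; $\widehat{\mathcal T}_{f_1}:=\mathcal T_f+\mathcal F_1\mathcal A_1^*\mathcal E_{\theta_1}^{-1}\mathcal A_1\mathcal F_1^*$, $\widehat{\mathcal T}_{f_i}:=\mathrm{diag}(\widehat{\mathcal T}_{f_{i-1}},\mathcal T_{\theta_{i-1}})+\mathcal F_i\mathcal A_i^*\mathcal E_{\theta_i}^{-1}\mathcal A_i\mathcal F_i^*$ ($i=2,\dots,p$). Analogously $\mathcal G_1:=\mathcal G$, $\mathcal G_{j+1}x:=(\mathcal Gx,\mathcal B_1x,\dots,\mathcal B_jx)$; $\widehat{\mathcal T}_{g_1}:=\mathcal T_g+\mathcal G_1\mathcal B_1^*\mathcal E_{\varphi_1}^{-1}\mathcal B_1\mathcal G_1^*$, $\widehat{\mathcal T}_{g_j}:=\mathrm{diag}(\widehat{\mathcal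 T}_{g_{j-1}},\mathcal T_{\varphi_{j-1}})+\mathcal G_j\mathcal B_j^*\mathcal E_{\varphi_j}^{-1}\mathcal B_j\mathcal G_j^*$ ($j=2,\dots,q$). Algorithm SCB-SPADMM: choose $(u^0,y^0,v^0,z^0,x^0)\in\mathrm{dom}f\times\mathcal Y\times\mathrm{dom}g\times\mathcal Z\times\mathcal X$; for $k=0,1,\dots$: (1) for $i=p,\dots,1$, $\bar y_i^k=\operatorname{argmin}_{y_i}\mathcal L_\sigma(u^k,(y^k_{\le i-1},y_i,\bar y^k_{\ge i+1}),v^k,z^k;x^k)+\frac\sigma2\|y_i-y_i^k\|^2_{\mathcal T_{\theta_i}}$, then $u^{k+1}=\operatorname{argmin}_u\mathcal L_\sigma(u,\bar y^k,v^k,z^k;x^k)+\frac\sigma2\|u-u^k\|^2_{\mathcal T_f}$; (2) for $i=1,\dots,p$, $y_i^{k+1}=\operatorname{argmin}_{y_i}\mathcal L_\sigma(u^{k+1},(y^{k+1}_{\le i-1},y_i,\bar y^k_{\ge i+1}),v^k,z^k;x^k)+\frac\sigma2\|y_i-y_i^k\|^2_{\mathcal T_{\theta_i}}$; (3) for $j=q,\dots,1$, $\bar z_j^k=\operatorname{argmin}_{z_j}\mathcal L_\sigma(u^{k+1},y^{k+1},v^k,(z^k_{\le j-1},z_j,\bar z^k_{\ge j+1});x^k)+\frac\sigma2\|z_j-z_j^k\|^2_{\mathcal T_{\varphi_j}}$, then $v^{k+1}=\operatorname{argmin}_v\mathcal L_\sigma(u^{k+1},y^{k+1},v,\bar z^k;x^k)+\frac\sigma2\|v-v^k\|^2_{\mathcal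 T_g}$; (4) for $j=1,\dots,q$, $z_j^{k+1}=\operatorname{argmin}_{z_j}\mathcal L_\sigma(u^{k+1},y^{k+1},v^{k+1},(z^{k+1}_{\le j-1},z_j,\bar z^k_{\ge j+1});x^k)+\frac\sigma2\|z_j-z_j^k\|^2_{\mathcal T_{\varphi_j}}$; (5) $x^{k+1}=x^k+\tau\sigma(\mathcal F^*u^{k+1}+\mathcal A^*y^{k+1}+\mathcal G^*v^{k+1}+\mathcal B^*z^{k+1}-c)$. *)

(* Defs.v *)
From HB Require Import structures.
From mathcomp Require Import all_boot all_order all_algebra.
From mathcomp Require Import all_classical all_reals all_analysis.
Set Implicit Arguments. Unset Strict Implicit. Unset Printing Implicit Defensive.
Import Order.TTheory GRing.Theory Num.Theory.
Import numFieldNormedType.Exports.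
Local Open Scope ring_scope.

(* Euclidean spaces are modelled as column vectors 'cV[R]_n with the standard
   inner product; linear maps as matrices (adjoint = transpose). *)

Definition ip (R : realType) n (a b : 'cV[R]_n) : R := (a^T *m b) 0 0.
Definition qn (R : realType) n (M : 'M[R]_n) (w : 'cV[R]_n) : R := ip w (M *m w).

Definition psdmx (R : realType) n (M : 'M[R]_n) : Prop :=
  M^T = M /\ forall w, 0 <= qn M w.
Definition pdmx (R : realType) n (M : 'M[R]_n) : Prop :=
  M^T = M /\ forall w, w != 0 -> 0 < qn M w.

Definition econvex (R : realType) n (f : 'cV[R]_n -> \bar R) : Prop :=
  forall (a b : 'cV[R]_n) (ra rb t : R), 0 <= t <= 1 ->
    (f a <= ra%:E)%E -> (f b <= rb%:E)%E ->
    (f (t *: a + (1 - t) *: b)%R <= (t * ra + (1 - t) * rb)%:E)%E.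
Definition eclosed (R : realType) n (f : 'cV[R]_n -> \bar R) : Prop :=
  forall alpha : R, closed [set w | (f w <= alpha%:E)%E].
Definition eproper (R : realType) n (f : 'cV[R]_n -> \bar R) : Prop :=
  (forall w, f w != -oo%E) /\ exists w, (f w < +oo)%E.
Definition closed_proper_convex (R : realType) n (f : 'cV[R]_n -> \bar R) :=
  [/\ econvex f, eclosed f & eproper f].

Definition is_argmin (R : realType) (T : Type) (phi : T -> \bar R) (x : T) : Prop :=
  forall w, (phi x <= phi w)%E.

(* block families (y_0, y_1, ...), y_j in 'cV_(nd j); only j < p is used *)
Definition bfam (R : realType) (nd : nat -> nat) := forall j : nat, 'cV[R]_(nd j).
Definition bmix (R : realType) nd (j : nat) (a b : bfam R nd) : bfam R nd :=
  fun l => if (l < j)%N then a l else b l.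
Definition bupd (R : realType) nd (a : bfam R nd) (j : nat) (w : 'cV[R]_(nd j)) : bfam R nd :=
  @dfwith nat (fun l => 'cV[R]_(nd l)) a j w.
Definition bsub (R : realType) nd (a b : bfam R nd) : bfam R nd := fun l => a l - b l.

Definition Gam (R : realType) nu nv nx (ny nz : nat -> nat) (p q : nat)
  (F : 'M[R]_(nu, nx)) (A : forall j, 'M[R]_(ny j, nx))
  (G : 'M[R]_(nv, nx)) (B : forall j, 'M[R]_(nz j, nx)) (c : 'cV[R]_nx)
  (u : 'cV[R]_nu) (y : bfam R ny) (v : 'cV[R]_nv) (z : bfam R nz) : 'cV[R]_nx :=
  F^T *m u + \sum_(j < p) (A j)^T *m y j + G^T *m v + \sum_(j < q) (B j)^T *m z j - c.

Definition quadf (R : realType) n (P : 'M[R]_n) (b : 'cV[R]_n) (w : 'cV[R]_n) : R :=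
  2^-1 * qn P w - ip b w.

Definition Lag (R : realType) nu nv nx (ny nz : nat -> nat) (p q : nat)
  (f : 'cV[R]_nu -> \bar R) (g : 'cV[R]_nv -> \bar R)
  (F : 'M[R]_(nu, nx)) (A : forall j, 'M[R]_(ny j, nx))
  (G : 'M[R]_(nv, nx)) (B : forall j, 'M[R]_(nz j, nx)) (c : 'cV[R]_nx)
  (P : forall j, 'M[R]_(ny j)) (b : bfam R ny)
  (Q : forall j, 'M[R]_(nz j)) (d : bfam R nz) (sigma : R)
  (u : 'cV[R]_nu) (y : bfam R ny) (v : 'cV[R]_nv) (z : bfam R nz) (x : 'cV[R]_nx)
  : \bar R :=
  let Gm := Gam p q F A G B c u y v z in
  (f u + g v +
   (\sum_(j < p) quadf (P j) (b j) (y j) + \sum_(j < q) quadf (Q j) (d j) (z j)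
    + ip x Gm + sigma / 2 * ip Gm Gm)%:E)%E.

Definition Tblk (R : realType) nx (ny : nat -> nat) (sigma : R)
  (P : forall j, 'M[R]_(ny j)) (A : forall j, 'M[R]_(ny j, nx))
  (E : forall j, 'M[R]_(ny j)) (j : nat) : 'M[R]_(ny j) :=
  E j - sigma^-1 *: P j - A j *m (A j)^T.

(* 0-based: index j here corresponds to the paper's index j+1.
   ds j = dim of U x Y_0 x ... x Y_{j-1} (domain of hatT_{f_{j+1}}) *)
Fixpoint ds nu (ny : nat -> nat) (j : nat) : nat :=
  match j with 0 => nu | S j' => (ds nu ny j' + ny j')%N end.

Fixpoint Fm (R : realType) nu nx (ny : nat -> nat) (F : 'M[R]_(nu, nx))
  (A : forall j, 'M[R]_(ny j, nx)) (j : nat) : 'M[R]_(ds nu ny j, nx) :=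
  match j return 'M[R]_(ds nu ny j, nx) with
  | 0 => F
  | S j' => col_mx (Fm F A j') (A j')
  end.

Fixpoint hatT (R : realType) nu nx (ny : nat -> nat) (sigma : R)
  (F : 'M[R]_(nu, nx)) (A : forall j, 'M[R]_(ny j, nx))
  (P : forall j, 'M[R]_(ny j)) (E : forall j, 'M[R]_(ny j)) (T0 : 'M[R]_nu)
  (j : nat) : 'M[R]_(ds nu ny j) :=
  match j return 'M[R]_(ds nu ny j) with
  | 0 => T0 + Fm F A 0 *m (A 0)^T *m invmx (E 0) *m A 0 *m (Fm F A 0)^T
  | S j' => block_mx (hatT sigma F A P E T0 j') 0 0 (Tblk sigma P A E j')
            + Fm F A (S j') *m (A (S j'))^T *m invmx (E (S j')) *m A (S j')
              *m (Fm F A (S j'))^T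
  end.

Fixpoint stack (R : realType) nu (ny : nat -> nat) (w : 'cV[R]_nu) (y : bfam R ny)
  (j : nat) : 'cV[R]_(ds nu ny j) :=
  match j return 'cV[R]_(ds nu ny j) with
  | 0 => w
  | S j' => col_mx (stack w y j') (y j')
  end.

(* Main.v *)
Require Import Defs.
From HB Require Import structures.
From mathcomp Require Import all_boot all_order all_algebra.
From mathcomp Require Import all_classical all_reals all_analysis.
From mathcomp Require Import ring lra.
Import Order.TTheory GRing.Theory Num.Theory.
Import numFieldNormedType.Exports.
Set Implicit Arguments. Unset Strict Implicit. Unset Printing Implicit Defensive.
Local Open Scope ring_scope.
Section IP.
Variable R : realType.
Variable n : nat.
Implicit Types a b w : 'cV[R]_n.
Lemma ipC a b : ip a b = ip b a.
Proof. by rewrite /ip -[in LHS](trmxK (a^T *m b)) trmx_mul trmxK mxE. Qed.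
Lemma ipDr a b w : ip a (b + w) = ip a b + ip a w.
Proof. by rewrite /ip mulmxDr mxE. Qed.
Lemma ipDl a b w : ip (b + w) a = ip b a + ip w a.
Proof. by rewrite ipC ipDr !(ipC a). Qed.
Lemma ipNr a b : ip a (- b) = - ip a b.
Proof. by rewrite /ip mulmxN mxE. Qed.
Lemma ipNl a b : ip (- b) a = - ip b a.
Proof. by rewrite ipC ipNr ipC. Qed.
Lemma ipBr a b w : ip a (b - w) = ip a b - ip a w.
Proof. by rewrite ipDr ipNr. Qed.
Lemma ipBl a b w : ip (b - w) a = ip b a - ip w a.
Proof. by rewrite ipDl ipNl. Qed.
Lemma ipZr a b (k : R) : ip a (k *: b) = k * ip a b.
Proof. by rewrite /ip -scalemxAr mxE. Qed.
Lemma ipZl a b (k : R) : ip (k *: a) b = k * ip a b.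
Proof. by rewrite ipC ipZr ipC. Qed.
Lemma ip0r a : ip a 0 = 0.
Proof. by rewrite /ip mulmx0 mxE. Qed.
Lemma ip0l a : ip 0 a = 0.
Proof. by rewrite ipC ip0r. Qed.
End IP.
Lemma ip_tr (R : realType) m n (M : 'M[R]_(m, n)) (a : 'cV[R]_m) (b : 'cV[R]_n) :
  ip a (M *m b) = ip (M^T *m a) b.
Proof. by rewrite /ip trmx_mul trmxK mulmxA. Qed.
Lemma ipxx_ge0 (R : realType) n (a : 'cV[R]_n) : 0 <= ip a a.
Proof. rewrite /ip mxE; apply: sumr_ge0 => i _; rewrite mxE -expr2; exact: sqr_ge0. Qed.
Section Key.
Variable R : realType.
Variable n : nat.
Variables (E Ei : 'M[R]_n).
Hypothesis Esym : E^T = E.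
Hypothesis Epd : forall w, w != 0 -> 0 < qn E w.
Hypothesis EEi : E *m Ei = 1%:M.
Hypothesis EiE : Ei *m E = 1%:M.
Definition qy (w y : 'cV[R]_n) : R := 2^-1 * qn E y + ip y w.
Lemma ipE_sym (a b : 'cV[R]_n) : ip b (E *m a) = ip a (E *m b).
Proof. by rewrite ip_tr Esym ipC. Qed.
Lemma qnE_sub (a b : 'cV[R]_n) : qn E (a - b) = ip a (E *m a) - 2 * ip a (E *m b) + ip b (E *m b).
Proof.
rewrite /qn mulmxBr !ipBl !ipBr (ipE_sym a b); ring.
Qed.
Lemma qnE_ge0 w : 0 <= qn E w.
Proof.
have [->|/Epd/ltW //] := eqVneq w 0.
by rewrite /qn mulmx0 ip0r.
Qed.
Lemma qy_argmin w ys : (forall y, qy w ys <= qy w y) -> ys = - (Ei *m w).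
Proof.
move=> H; set yc := - (Ei *m w).
have wE : w = - (E *m yc) by rewrite /yc mulmxN opprK mulmxA EEi mul1mx.
have key : qy w ys - qy w yc = 2^-1 * qn E (ys - yc).
  rewrite /qy wE !ipNr qnE_sub /qn; lra.
have := H yc; rewrite -subr_le0 key => h.
apply/eqP; rewrite -subr_eq0; apply/negPn/negP => /Epd hp.
have : 0 < 2^-1 * qn E (ys - yc) by rewrite mulr_gt0 // invr_gt0.
by rewrite ltNge h.
Qed.

Lemma key_real (w0 w1 wx ybar y1 y : 'cV[R]_n) :
  (forall y, qy w0 ybar <= qy w0 y) -> (forall y, qy w1 y1 <= qy w1 y) ->
  qy w1 y1 + 2^-1 * qn Ei (w1 - w0) - qy w1 ybar <=
  qy wx y + 2^-1 * qn Ei (wx - w0) - qy wx ybar.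
Proof.
move=> /qy_argmin hb /qy_argmin h1.
set yx := - (Ei *m wx).
have wsub : forall (a : 'cV[R]_n), a = - (E *m (- (Ei *m a))).
  by move=> a; rewrite mulmxN opprK mulmxA EEi mul1mx.
have qnEi : forall a b : 'cV[R]_n, qn Ei (- (E *m b) - - (E *m a)) = qn E (a - b).
  by move=> a b; rewrite opprK addrC -mulmxBr /qn mulmxA EiE mul1mx ipC.
rewrite (wsub w0) (wsub w1) (wsub wx) -hb -h1 -/yx.
rewrite !qnEi /qy !ipNr !qnE_sub /qn.
have : 0 <= qn E (y - yx) by apply: qnE_ge0.
rewrite qnE_sub => hh.
lra.
Qed.
End Key.
Section TwoBlock.
Local Open Scope ereal_scope.
Variable R : realType.
Variable n : nat.
Variables (E Ei : 'M[R]_n).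
Hypothesis Esym : E^T = E.
Hypothesis Epd : forall w : 'cV[R]_n, (w != 0)%R -> (0 < qn E w)%R.
Hypothesis EEi : (E *m Ei = 1%:M)%R.
Hypothesis EiE : (Ei *m E = 1%:M)%R.

Lemma twoblock (X : Type) (a : X -> \bar R) (h : X -> 'cV[R]_n) (k : 'cV[R]_n)
  (x0 x1 : X) (ybar y1 : 'cV[R]_n) :
  a x0 \is a fin_num -> (forall x, a x != -oo) ->
  (forall w, a x0 + (qy E (h x0 + k) ybar)%:E <= a x0 + (qy E (h x0 + k) w)%:E) ->
  (forall x, a x1 + (qy E (h x1 + k) ybar)%:E <= a x + (qy E (h x + k) ybar)%:E) ->
  (forall w, a x1 + (qy E (h x1 + k) y1)%:E <= a x1 + (qy E (h x1 + k) w)%:E) ->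
  forall x w, a x1 + (qy E (h x1 + k) y1 + 2^-1 * qn Ei (h x1 - h x0))%:E
     <= a x + (qy E (h x + k) w + 2^-1 * qn Ei (h x - h x0))%:E.
Proof.
move=> f0 ninf H1 H2 H3 x w.
have H1' : forall w, (qy E (h x0 + k) ybar <= qy E (h x0 + k) w)%R.
  by move=> w'; have := H1 w'; rewrite leeD2lE.
have f1 : a x1 \is a fin_num.
  rewrite fin_numE ninf /=; apply/negP => /eqP e.
  have := H2 x0; rewrite e addye // leye_eq => /eqP.
  by move: f0; case: (a x0).
have H3' : forall w, (qy E (h x1 + k) y1 <= qy E (h x1 + k) w)%R.
  by move=> w'; have := H3 w'; rewrite leeD2lE.
have K := key_real Esym Epd EEi EiE (h x + k) w H1' H3'.
have eB : forall z, (h z - h x0 = (h z + k) - (h x0 + k))%R.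
  by move=> z; rewrite opprD addrACA subrr addr0.
rewrite !eB.
set D1 := (qy E (h x1 + k) y1 + _ - _)%R in K.
set Dx := (qy E (h x + k) w + _ - _)%R in K.
have -> : (qy E (h x1 + k) y1 + 2^-1 * qn Ei (h x1 + k - (h x0 + k)) =
           qy E (h x1 + k) ybar + D1)%R by rewrite /D1; lra.
have -> : (qy E (h x + k) w + 2^-1 * qn Ei (h x + k - (h x0 + k)) =
           qy E (h x + k) ybar + Dx)%R by rewrite /Dx; lra.
rewrite (EFinD _ D1) (EFinD _ Dx) !addeA; apply: leeD => //.
Qed.
End TwoBlock.
Section Conc.
Variable R : realType.
Variables (nu nx : nat) (ny : nat -> nat).
Variables (F : 'M[R]_(nu, nx)) (A : forall j, 'M[R]_(ny j, nx)).
Variables (P : forall j, 'M[R]_(ny j)) (b : bfam R ny) (xx : 'cV[R]_nx) (sigma : R).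

Definition Gp p (r : 'cV[R]_nx) (u : 'cV[R]_nu) (y : bfam R ny) : 'cV[R]_nx :=
  F^T *m u + \sum_(j < p) (A j)^T *m y j + r.
Definition Obj p (phi : 'cV[R]_nu -> \bar R) r (u : 'cV[R]_nu) (y : bfam R ny) : \bar R :=
  (phi u + (\sum_(j < p) quadf (P j) (b j) (y j) + ip xx (Gp p r u y)
    + sigma / 2 * ip (Gp p r u y) (Gp p r u y))%:E)%E.

Lemma Obj_ext p phi r u (y y' : bfam R ny) :
  (forall j, (j < p)%N -> y j = y' j) -> Obj p phi r u y = Obj p phi r u y'.
Proof.
move=> e; rewrite /Obj /Gp.
rewrite (eq_bigr (fun j : 'I_p => quadf (P j) (b j) (y' j))); last by move=> i _; rewrite e.
by rewrite (eq_bigr (fun j : 'I_p => (A j)^T *m y' j)) //; move=> i _; rewrite e.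
Qed.

Lemma ObjS p phi r (u : 'cV[R]_nu) (y : bfam R ny) :
  Obj p.+1 phi r u y =
  Obj p (fun u => phi u + (quadf (P p) (b p) (y p))%:E)%E (r + (A p)^T *m y p) u y.
Proof.
rewrite /Obj /Gp !big_ord_recr /=.
have -> : F^T *m u + (\sum_(i < p) (A i)^T *m y i + (A p)^T *m y p) + r =
          F^T *m u + \sum_(i < p) (A i)^T *m y i + (r + (A p)^T *m y p).
  by rewrite addrA -!addrA (addrC r).
rewrite -addeA -EFinD; congr (_ + _%:E)%E; lra.
Qed.

Lemma Fm_stack j (u : 'cV[R]_nu) (y : bfam R ny) :
  (Fm F A j)^T *m stack u y j = F^T *m u + \sum_(l < j) (A l)^T *m y l.
Proof.
elim: j => [|j IH] /=; first by rewrite big_ord0 addr0.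
by rewrite tr_col_mx mul_row_col IH big_ord_recr /= addrA.
Qed.

Lemma stackB j (u u' : 'cV[R]_nu) (y y' : bfam R ny) :
  stack u y j - stack u' y' j = stack (u - u') (bsub y y') j.
Proof.
elim: j => [|j IH] //=.
by rewrite opp_col_mx add_col_mx IH.
Qed.

Lemma bupd_in (y : bfam R ny) j (w : 'cV[R]_(ny j)) : bupd y w j = w.
Proof. exact: dfwith_in. Qed.
Lemma bupd_out (y : bfam R ny) j (w : 'cV[R]_(ny j)) l : j != l -> bupd y w l = y l.
Proof. exact: dfwith_out. Qed.

Lemma ObjU j phi r (u : 'cV[R]_nu) (y : bfam R ny) (w : 'cV[R]_(ny j)) :
  Obj j.+1 phi r u (bupd y w) =
  (phi u + (\sum_(l < j) quadf (P l) (b l) (y l) + quadf (P j) (b j) w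
    + ip xx ((Fm F A j)^T *m stack u y j + r + (A j)^T *m w)
    + sigma / 2 * ip ((Fm F A j)^T *m stack u y j + r + (A j)^T *m w)
                     ((Fm F A j)^T *m stack u y j + r + (A j)^T *m w))%:E)%E.
Proof.
rewrite ObjS /Obj /Gp Fm_stack bupd_in.
have -> : \sum_(l < j) quadf (P l) (b l) (bupd y w l)
          = \sum_(l < j) quadf (P l) (b l) (y l).
  by apply: eq_bigr => l _; rewrite bupd_out // neq_ltn ltn_ord orbT.
have -> : \sum_(l < j) (A l)^T *m (bupd y w l)
          = \sum_(l < j) (A l)^T *m y l.
  by apply: eq_bigr => l _; rewrite bupd_out // neq_ltn ltn_ord orbT.
rewrite -addeA -EFinD; congr (_ + _%:E)%E.
rewrite !addrA /quadf; lra.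
Qed.

End Conc.

Lemma qnD (R : realType) n (M N : 'M[R]_n) w : qn (M + N) w = qn M w + qn N w.
Proof. by rewrite /qn mulmxDl ipDr. Qed.

Lemma ip_col (R : realType) m n (a a' : 'cV[R]_m) (d d' : 'cV[R]_n) :
  ip (col_mx a d) (col_mx a' d') = ip a a' + ip d d'.
Proof. by rewrite /ip tr_col_mx mul_row_col mxE. Qed.

Lemma qn_block (R : realType) m n (M : 'M[R]_m) (N : 'M[R]_n) a d :
  qn (block_mx M 0 0 N) (col_mx a d) = qn M a + qn N d.
Proof. by rewrite /qn mul_block_col !mul0mx addr0 add0r ip_col. Qed.
Lemma decomp_real (R : realType) n nx (A : 'M[R]_(n,nx)) (P T E : 'M[R]_n) (bb : 'cV[R]_n)
  (xx g0 : 'cV[R]_nx) (y0 w : 'cV[R]_n) (sigma : R) :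
  sigma != 0 -> T = E - sigma^-1 *: P - A *m A^T -> T^T = T ->
  quadf P bb w + ip xx (g0 + A^T *m w) + sigma / 2 * ip (g0 + A^T *m w) (g0 + A^T *m w)
    + sigma / 2 * qn T (w - y0)
  = (quadf P bb 0 + ip xx (g0 + A^T *m 0) + sigma / 2 * ip (g0 + A^T *m 0) (g0 + A^T *m 0)
     + sigma / 2 * qn T (0 - y0))
    + qy (sigma *: E) (sigma *: (A *m g0) + A *m xx - bb - sigma *: (T *m y0)) w.
Proof.
move=> s0 eT Ts.
have eP : P = sigma *: (E - T - A *m A^T).
  rewrite eT; apply/matrixP => i j; rewrite !mxE.
  set Y := (\sum_(k < nx) _)%R; field; exact: s0.
rewrite mulmx0 addr0 /quadf /qy /qn eP.
rewrite sub0r !mulmx0 ip0l ip0r mulmxN ipNl ipNr opprK.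
rewrite -!scalemxAl !mulmxBl !mulmxBr !ipZr !ipBl !ipBr !ipDl !ipDr !ipZr.
rewrite -(mulmxA A) ![ip w (A *m _)]ip_tr [ip y0 (T *m w)]ip_tr Ts.
rewrite (ipC g0) (ipC xx) (ipC w bb) (ipC (T *m y0)).
rewrite mulr0 subr0 (ipC xx (A^T *m w)); by field.
Qed.
Lemma pd_unit (R : realType) n (E : 'M[R]_n) : pdmx E -> E \in unitmx.
Proof.
move=> [Es Epd]; rewrite -row_free_unit -kermx_eq0; apply/eqP/row_matrixP => i.
rewrite row0; set r := row i (kermx E).
have rE : r *m E = 0 by rewrite /r -row_mul mulmx_ker row0.
have wE : E *m r^T = 0 by rewrite -{1}Es -trmx_mul rE trmx0.
apply/eqP/negPn/negP => /eqP rn.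
have : r^T != 0 by apply/eqP => h; apply: rn; rewrite -(trmxK r) h trmx0.
by move/Epd; rewrite /qn wE ip0r ltxx.
Qed.

Lemma qn_tr (R : realType) m n (N : 'M[R]_(m, n)) (M : 'M[R]_m) s :
  qn (N^T *m M *m N) s = qn M (N *m s).
Proof. by rewrite /qn -!mulmxA ip_tr trmxK. Qed.

Lemma qn_scale (R : realType) n (M : 'M[R]_n) (c d : R) s :
  qn (c *: M) (d *: s) = c * d * d * qn M s.
Proof. by rewrite /qn -scalemxAl -scalemxAr !ipZl !ipZr; ring. Qed.

Lemma qn0 (R : realType) n (M : 'M[R]_n) : qn M 0 = 0.
Proof. by rewrite /qn mulmx0 ip0r. Qed.

Section Lift.
Local Open Scope ereal_scope.
Variable R : realType.
Variables (nu nx : nat) (ny : nat -> nat).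
Variables (F : 'M[R]_(nu, nx)) (A : forall j, 'M[R]_(ny j, nx)).
Variables (P : forall j, 'M[R]_(ny j)) (b : bfam R ny) (xx : 'cV[R]_nx) (sigma : R).
Variables (Ey : forall j, 'M[R]_(ny j)) (Tf : 'M[R]_nu).

Definition Dm j : 'M[R]_(ds nu ny j) :=
  match j with 0 => Tf | S j' => block_mx (hatT sigma F A P Ey Tf j') 0 0 (Tblk sigma P A Ey j') end.

Lemma hatT_Dm j : hatT sigma F A P Ey Tf j =
  (Dm j + Fm F A j *m (A j)^T *m invmx (Ey j) *m A j *m (Fm F A j)^T)%R.
Proof. by case: j. Qed.

Lemma lift j (phi : 'cV[R]_nu -> \bar R) (r : 'cV[R]_nx) (u0 u1 : 'cV[R]_nu)
  (y0 y1 ybar : bfam R ny) :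
  (0 < sigma)%R -> pdmx (Ey j) -> (Tblk sigma P A Ey j)^T = Tblk sigma P A Ey j ->
  (forall u, phi u != -oo) -> phi u0 \is a fin_num ->
  (forall u y,
     Obj F A P b xx sigma j.+1 phi r u1 (bupd y1 (ybar j))
       + (sigma / 2 * qn (Dm j) (stack (u1 - u0) (bsub y1 y0) j))%:E
     <= Obj F A P b xx sigma j.+1 phi r u (bupd y (ybar j))
       + (sigma / 2 * qn (Dm j) (stack (u - u0) (bsub y y0) j))%:E) ->
  (forall w,
     Obj F A P b xx sigma j.+1 phi r u0 (bupd y0 (ybar j))
       + (sigma / 2 * qn (Tblk sigma P A Ey j) (ybar j - y0 j))%:E
     <= Obj F A P b xx sigma j.+1 phi r u0 (bupd y0 w)
       + (sigma / 2 * qn (Tblk sigma P A Ey j) (w - y0 j))%:E) ->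
  (forall w,
     Obj F A P b xx sigma j.+1 phi r u1 (bupd y1 (y1 j))
       + (sigma / 2 * qn (Tblk sigma P A Ey j) (y1 j - y0 j))%:E
     <= Obj F A P b xx sigma j.+1 phi r u1 (bupd y1 w)
       + (sigma / 2 * qn (Tblk sigma P A Ey j) (w - y0 j))%:E) ->
  forall u y,
     Obj F A P b xx sigma j.+1 phi r u1 y1
       + (sigma / 2 * qn (hatT sigma F A P Ey Tf j) (stack (u1 - u0) (bsub y1 y0) j)
          + sigma / 2 * qn (Tblk sigma P A Ey j) (y1 j - y0 j))%:E
     <= Obj F A P b xx sigma j.+1 phi r u y
       + (sigma / 2 * qn (hatT sigma F A P Ey Tf j) (stack (u - u0) (bsub y y0) j)
          + sigma / 2 * qn (Tblk sigma P A Ey j) (y j - y0 j))%:E.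
Proof.
move=> hs hE hT hphi hphi0 Hin Hyb Hy1.
set T := Tblk sigma P A Ey j.
set ObjL := Obj F A P b xx sigma j.+1 phi r.
pose Phi (x : 'cV[R]_nu * bfam R ny) (w : 'cV[R]_(ny j)) :=
  ObjL x.1 (bupd x.2 w) + (sigma / 2 * qn (Dm j) (stack (x.1 - u0) (bsub x.2 y0) j)
                           + sigma / 2 * qn T (w - y0 j))%:E.
pose a x := Phi x 0%R.
pose h (x : 'cV[R]_nu * bfam R ny) := (sigma *: (A j *m ((Fm F A j)^T *m stack x.1 x.2 j)))%R.
pose k := (sigma *: (A j *m r) + A j *m xx - b j - sigma *: (T *m y0 j))%R.
have s0 : sigma != 0%R by rewrite gt_eqF.
have eT : T = (Ey j - sigma^-1 *: P j - A j *m (A j)^T)%R by [].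
have Dec : forall x w, Phi x w = a x + (qy (sigma *: Ey j) (h x + k) w)%:E.
  move=> [u y] w; rewrite /a /Phi /ObjL !ObjU /=.
  have e := decomp_real (b j) xx ((Fm F A j)^T *m stack u y j + r) (y0 j) w s0 eT hT.
  have ehk : (h (u, y) + k = sigma *: (A j *m ((Fm F A j)^T *m stack u y j + r))
              + A j *m xx - b j - sigma *: (T *m y0 j))%R.
    by rewrite /h /k /= mulmxDr scalerDr !addrA.
  rewrite ehk -!addeA -!EFinD; congr (_ + _%:E).
  move: e; rewrite /quadf !addrA; lra.
have hEu := pd_unit hE.
have Esym' : (sigma *: Ey j)^T = (sigma *: Ey j)%R by rewrite linearZ /= hE.1.
have Epd' : forall w : 'cV[R]_(ny j), (w != 0)%R -> (0 < qn (sigma *: Ey j) w)%R.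
  by move=> w /hE.2 hw; rewrite /qn -scalemxAl ipZr mulr_gt0.
have EEi : ((sigma *: Ey j) *m (sigma^-1 *: invmx (Ey j)) = 1%:M)%R.
  by rewrite -scalemxAl -scalemxAr scalerA mulfV // scale1r mulmxV.
have EiE : ((sigma^-1 *: invmx (Ey j)) *m (sigma *: Ey j) = 1%:M)%R.
  by rewrite -scalemxAl -scalemxAr scalerA mulVf // scale1r mulVmx.
have Hx0 : forall w, Phi (u0, y0) w = ObjL u0 (bupd y0 w) + (sigma / 2 * qn T (w - y0 j))%:E.
  by move=> w; rewrite /Phi /= -stackB subrr qn0 mulr0 add0r.
have Hx1 : forall w, Phi (u1, y1) w = (ObjL u1 (bupd y1 w) + (sigma / 2 * qn T (w - y0 j))%:E)
     + (sigma / 2 * qn (Dm j) (stack (u1 - u0) (bsub y1 y0) j))%:E.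
  by move=> w; rewrite /Phi /= EFinD addeA addeAC.
have tb := twoblock Esym' Epd' EEi EiE (a:=a) (h:=h) (k:=k) (x0:=(u0,y0)) (x1:=(u1,y1))
  (ybar:=ybar j) (y1:=y1 j).
have conv : forall u y, a (u, y) + (qy (sigma *: Ey j) (h (u, y) + k) (y j)
   + 2^-1 * qn (sigma^-1 *: invmx (Ey j)) (h (u, y) - h (u0, y0)))%:E =
   ObjL u y + (sigma / 2 * qn (hatT sigma F A P Ey Tf j) (stack (u - u0) (bsub y y0) j)
          + sigma / 2 * qn T (y j - y0 j))%:E.
  move=> u y; rewrite EFinD addeA -Dec /Phi /=.
  have -> : ObjL u (bupd y (y j)) = ObjL u y.
    by apply: Obj_ext => l _; rewrite /bupd; case: dfwithP.
  have -> : (h (u, y) - h (u0, y0) =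
     sigma *: ((A j *m (Fm F A j)^T) *m stack (u - u0) (bsub y y0) j))%R.
    by rewrite /h /= -scalerBr -!mulmxBr stackB mulmxA.
  have eK : (Fm F A j *m (A j)^T *m invmx (Ey j) *m A j *m (Fm F A j)^T =
      (A j *m (Fm F A j)^T)^T *m invmx (Ey j) *m (A j *m (Fm F A j)^T))%R.
    by rewrite trmx_mul trmxK !mulmxA.
  rewrite -addeA -EFinD hatT_Dm qnD eK qn_tr qn_scale; congr (_ + _%:E).
  by field.
move=> u y; rewrite -(conv u y) -(conv u1 y1); apply: tb.
- by rewrite /a Hx0 fin_numD /ObjL /Obj fin_numD hphi0.
- by move=> [u' y']; rewrite /a /Phi /ObjL /Obj !adde_eq_ninfty (negbTE (hphi u')).
- by move=> w; rewrite -!Dec !Hx0; exact: Hyb.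
- by move=> [u' y']; rewrite -!Dec /Phi /= !EFinD !addeA; apply: leeD2r; exact: Hin u' y'.
- by move=> w; rewrite -!Dec !Hx1; apply: leeD2r; exact: Hy1.
Qed.
End Lift.
Section Half.
Local Open Scope ereal_scope.
Variable R : realType.
Variables (nu nx : nat) (ny : nat -> nat).
Variables (F : 'M[R]_(nu, nx)) (A : forall j, 'M[R]_(ny j, nx)).
Variables (P : forall j, 'M[R]_(ny j)) (b : bfam R ny) (xx : 'cV[R]_nx) (sigma : R).
Variables (Ey : forall j, 'M[R]_(ny j)) (Tf : 'M[R]_nu).

Lemma bupd_bmix j (a c : bfam R ny) (w : 'cV[R]_(ny j)) l :
  (l < j.+1)%N -> bupd (bmix j a c) w l = bupd a w l.
Proof.
move=> hl; case: (eqVneq j l) => [e|ne].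
  by subst l; rewrite !bupd_in.
rewrite !bupd_out // /bmix.
by move: hl; rewrite ltnS leq_eqVlt eq_sym (negbTE ne) /= => ->.
Qed.

Lemma bupd_bmix_hi j (a c : bfam R ny) (w : 'cV[R]_(ny j)) l :
  (j < l)%N -> bupd (bmix j a c) w l = c l.
Proof.
move=> hl; rewrite bupd_out; last by rewrite neq_ltn hl.
by rewrite /bmix ltnNge (ltnW hl).
Qed.

Lemma half n : forall (phi : 'cV[R]_nu -> \bar R) (r : 'cV[R]_nx) (u0 u1 : 'cV[R]_nu)
  (y0 y1 ybar : bfam R ny),
  (0 < sigma)%R ->
  (forall j, (j < n.+1)%N -> pdmx (Ey j) /\ psdmx (Tblk sigma P A Ey j)) ->
  (forall u, phi u != -oo) -> phi u0 \is a fin_num ->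
  (forall j, (j < n.+1)%N -> is_argmin (fun w : 'cV[R]_(ny j) =>
      Obj F A P b xx sigma n.+1 phi r u0 (bupd (bmix j y0 ybar) w)
      + (sigma / 2 * qn (Tblk sigma P A Ey j) (w - y0 j))%:E) (ybar j)) ->
  is_argmin (fun w : 'cV[R]_nu =>
      Obj F A P b xx sigma n.+1 phi r w ybar + (sigma / 2 * qn Tf (w - u0))%:E) u1 ->
  (forall j, (j < n.+1)%N -> is_argmin (fun w : 'cV[R]_(ny j) =>
      Obj F A P b xx sigma n.+1 phi r u1 (bupd (bmix j y1 ybar) w)
      + (sigma / 2 * qn (Tblk sigma P A Ey j) (w - y0 j))%:E) (y1 j)) ->
  is_argmin (fun uy : 'cV[R]_nu * bfam R ny =>
      Obj F A P b xx sigma n.+1 phi r uy.1 uy.2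
      + (sigma / 2 * qn (hatT sigma F A P Ey Tf n) (stack (uy.1 - u0) (bsub uy.2 y0) n)
         + sigma / 2 * qn (Tblk sigma P A Ey n) (uy.2 n - y0 n))%:E) (u1, y1).
Proof.
elim: n => [|m IH] phi r u0 u1 y0 y1 ybar hs hEP hphi hphi0 S1 Su S2.
- move=> [u y] /=.
  have [hE [hT _]] := hEP 0%N isT.
  apply: (lift (ybar:=ybar) hs hE hT hphi hphi0).
  + move=> u' y'.
    have e : forall u'', Obj F A P b xx sigma 1 phi r u'' (bupd y' (ybar 0%N)) =
                         Obj F A P b xx sigma 1 phi r u'' ybar.
      by move=> u''; apply: Obj_ext => l; rewrite ltnS leqn0 => /eqP ->; rewrite bupd_in.
    have e1 : Obj F A P b xx sigma 1 phi r u1 (bupd y1 (ybar 0%N)) =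
              Obj F A P b xx sigma 1 phi r u1 ybar.
      by apply: Obj_ext => l; rewrite ltnS leqn0 => /eqP ->; rewrite bupd_in.
    rewrite e e1 /=; exact: Su.
  + move=> w; have := S1 0%N isT w.
    rewrite (Obj_ext _ _ _ _ _ _ _ _ _ (bupd_bmix _ _ _)) //.
    by rewrite (Obj_ext _ _ _ _ _ _ _ _ _ (bupd_bmix _ _ _)).
  + move=> w; have := S2 0%N isT w.
    rewrite (Obj_ext _ _ _ _ _ _ _ _ _ (bupd_bmix _ _ _)) //.
    by rewrite (Obj_ext _ _ _ _ _ _ _ _ _ (bupd_bmix _ _ _)).
- set phi' := fun u => phi u + (quadf (P m.+1) (b m.+1) (ybar m.+1))%:E.
  set r' := (r + (A m.+1)^T *m ybar m.+1)%R.
  have OS : forall u (y : bfam R ny), y m.+1 = ybar m.+1 ->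
      Obj F A P b xx sigma m.+2 phi r u y = Obj F A P b xx sigma m.+1 phi' r' u y.
    by move=> u y e; rewrite ObjS e.
  have IH' := IH phi' r' u0 u1 y0 y1 ybar hs
    (fun j hj => hEP j (ltnW hj)).
  have IH2 : is_argmin (fun uy : 'cV[R]_nu * bfam R ny =>
      Obj F A P b xx sigma m.+1 phi' r' uy.1 uy.2
      + (sigma / 2 * qn (hatT sigma F A P Ey Tf m) (stack (uy.1 - u0) (bsub uy.2 y0) m)
         + sigma / 2 * qn (Tblk sigma P A Ey m) (uy.2 m - y0 m))%:E) (u1, y1).
    apply: IH'.
    + by move=> u; rewrite /phi' adde_eq_ninfty (negbTE (hphi u)).
    + by rewrite /phi' fin_numD hphi0.
    + move=> j hj w; rewrite -!OS; first exact: S1 (ltnW hj) w.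
      * exact: bupd_bmix_hi.
      * exact: bupd_bmix_hi.
    + by move=> w; rewrite -!OS //; exact: Su w.
    + move=> j hj w; rewrite -!OS; first exact: S2 (ltnW hj) w.
      * exact: bupd_bmix_hi.
      * exact: bupd_bmix_hi.
  move=> [u y] /=.
  have [hE [hT _]] := hEP m.+1 (ltnSn _).
  apply: (lift (ybar:=ybar) hs hE hT hphi hphi0).
  + have eI : forall u (y : bfam R ny),
       Obj F A P b xx sigma m.+2 phi r u (bupd y (ybar m.+1))
       + (sigma / 2 * qn (Dm F A P sigma Ey Tf m.+1) (stack (u - u0) (bsub y y0) m.+1))%:E
       = Obj F A P b xx sigma m.+1 phi' r' u y
       + (sigma / 2 * qn (hatT sigma F A P Ey Tf m) (stack (u - u0) (bsub y y0) m)
         + sigma / 2 * qn (Tblk sigma P A Ey m) (y m - y0 m))%:E.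
      move=> u' y'; rewrite OS; last exact: bupd_in.
      rewrite (@Obj_ext _ _ _ _ F A P b xx sigma m.+1 phi' r' u' _ y'); last first.
        by move=> l hl; rewrite bupd_out // neq_ltn hl orbT.
      by rewrite /= qn_block mulrDr.
    by move=> u' y'; rewrite !eI; exact: IH2 (u', y').
  + move=> w; have := S1 m.+1 (ltnSn _) w.
    rewrite (Obj_ext _ _ _ _ _ _ _ _ _ (bupd_bmix _ _ _)) //.
    by rewrite (Obj_ext _ _ _ _ _ _ _ _ _ (bupd_bmix _ _ _)).
  + move=> w; have := S2 m.+1 (ltnSn _) w.
    rewrite (Obj_ext _ _ _ _ _ _ _ _ _ (bupd_bmix _ _ _)) //.
    by rewrite (Obj_ext _ _ _ _ _ _ _ _ _ (bupd_bmix _ _ _)).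
Qed.
End Half.
Section Main.
Local Open Scope ereal_scope.
Variable R : realType.

Lemma LagU nu nv nx (ny nz : nat -> nat) p q f g F A G B c P b Q d (sigma : R)
  (u : 'cV[R]_nu) (y : bfam R ny) (v : 'cV[R]_nv) (z : bfam R nz) (x : 'cV[R]_nx) :
  Lag p q f g F A G B c P b Q d sigma u y v z x =
  Obj F A P b x sigma p (fun w => f w + g v + (\sum_(j < q) quadf (Q j) (d j) (z j))%:E)
    (G^T *m v + \sum_(j < q) (B j)^T *m z j - c) u y.
Proof.
rewrite /Lag /Obj /Gp /Gam.
have -> : (F^T *m u + \sum_(j < p) (A j)^T *m y j + G^T *m v + \sum_(j < q) (B j)^T *m z j - c
  = F^T *m u + \sum_(j < p) (A j)^T *m y j + (G^T *m v + \sum_(j < q) (B j)^T *m z j - c))%R.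
  by rewrite !addrA.
rewrite /= -[in RHS]addeA -[in RHS]EFinD; congr (_ + _%:E); rewrite /quadf; lra.
Qed.

Lemma LagV nu nv nx (ny nz : nat -> nat) p q f g F A G B c P b Q d (sigma : R)
  (u : 'cV[R]_nu) (y : bfam R ny) (v : 'cV[R]_nv) (z : bfam R nz) (x : 'cV[R]_nx) :
  Lag p q f g F A G B c P b Q d sigma u y v z x =
  Obj G B Q d x sigma q (fun w => f u + g w + (\sum_(j < p) quadf (P j) (b j) (y j))%:E)
    (F^T *m u + \sum_(j < p) (A j)^T *m y j - c) v z.
Proof.
rewrite /Lag /Obj /Gp /Gam.
have -> : (F^T *m u + \sum_(j < p) (A j)^T *m y j + G^T *m v + \sum_(j < q) (B j)^T *m z j - c
  = G^T *m v + \sum_(j < q) (B j)^T *m z j + (F^T *m u + \sum_(j < p) (A j)^T *m y j - c))%R.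
  by apply/matrixP => i j; rewrite !mxE; lra.
rewrite /= -[in RHS]addeA -[in RHS]EFinD (addeC (f u)); congr (_ + _%:E); rewrite /quadf; lra.
Qed.

Lemma fin_of_le (a s t : \bar R) : a != -oo -> s \is a fin_num -> t \is a fin_num ->
  a + s <= t -> a \is a fin_num.
Proof.
case: a => // _ fs ft; rewrite addye; last by move: fs; case: s.
by rewrite leye_eq => /eqP e; move: ft; rewrite e.
Qed.
End Main.
Unset Implicit Arguments. Set Strict Implicit.

(* Block indices are 0-based: y_j (j < p) here is the paper's y_{j+1}. *)
Theorem proposition3p2 (R : realType) (nu nv nx : nat) (ny nz : nat -> nat) (p q : nat)
  (f : 'cV[R]_nu -> \bar R) (g : 'cV[R]_nv -> \bar R)
  (F : 'M[R]_(nu, nx)) (G : 'M[R]_(nv, nx))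
  (A : forall j, 'M[R]_(ny j, nx)) (B : forall j, 'M[R]_(nz j, nx))
  (c : 'cV[R]_nx)
  (P : forall j, 'M[R]_(ny j)) (b : bfam R ny)
  (Q : forall j, 'M[R]_(nz j)) (d : bfam R nz)
  (sigma tau : R)
  (Ey : forall j, 'M[R]_(ny j)) (Ez : forall j, 'M[R]_(nz j))
  (Tf : 'M[R]_nu) (Tg : 'M[R]_nv)
  (u : nat -> 'cV[R]_nu) (y ybar : nat -> bfam R ny)
  (v : nat -> 'cV[R]_nv) (z zbar : nat -> bfam R nz)
  (x : nat -> 'cV[R]_nx) :
  (0 < p)%N -> (0 < q)%N -> 0 < sigma -> 0 < tau ->
  closed_proper_convex f -> closed_proper_convex g ->
  (forall j, (j < p)%N -> psdmx (P j)) ->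
  (forall j, (j < q)%N -> psdmx (Q j)) ->
  (forall j, (j < p)%N -> pdmx (Ey j) /\ psdmx (Tblk sigma P A Ey j)) ->
  (forall j, (j < q)%N -> pdmx (Ez j) /\ psdmx (Tblk sigma Q B Ez j)) ->
  psdmx Tf -> psdmx Tg ->
  (f (u 0%N) < +oo)%E -> (g (v 0%N) < +oo)%E ->
  let L := Lag p q f g F A G B c P b Q d sigma in
  (* the sequence is generated by Algorithm SCB-SPADMM *)
  (forall k,
    (* step 1 *)
    (forall j, (j < p)%N ->
       is_argmin (fun w : 'cV[R]_(ny j) =>
           (L (u k) (bupd (bmix j (y k) (ybar k)) w) (v k) (z k) (x k)
            + (sigma / 2 * qn (Tblk sigma P A Ey j) (w - y k j))%:E)%E)
         (ybar k j))
    /\ is_argmin (fun w : 'cV[R]_nu =>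
           (L w (ybar k) (v k) (z k) (x k) + (sigma / 2 * qn Tf (w - u k))%:E)%E)
         (u k.+1)
    (* step 2 *)
    /\ (forall j, (j < p)%N ->
       is_argmin (fun w : 'cV[R]_(ny j) =>
           (L (u k.+1) (bupd (bmix j (y k.+1) (ybar k)) w) (v k) (z k) (x k)
            + (sigma / 2 * qn (Tblk sigma P A Ey j) (w - y k j))%:E)%E)
         (y k.+1 j))
    (* step 3 *)
    /\ (forall j, (j < q)%N ->
       is_argmin (fun w : 'cV[R]_(nz j) =>
           (L (u k.+1) (y k.+1) (v k) (bupd (bmix j (z k) (zbar k)) w) (x k)
            + (sigma / 2 * qn (Tblk sigma Q B Ez j) (w - z k j))%:E)%E)
         (zbar k j))
    /\ is_argmin (fun w : 'cV[R]_nv =>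
           (L (u k.+1) (y k.+1) w (zbar k) (x k) + (sigma / 2 * qn Tg (w - v k))%:E)%E)
         (v k.+1)
    (* step 4 *)
    /\ (forall j, (j < q)%N ->
       is_argmin (fun w : 'cV[R]_(nz j) =>
           (L (u k.+1) (y k.+1) (v k.+1) (bupd (bmix j (z k.+1) (zbar k)) w) (x k)
            + (sigma / 2 * qn (Tblk sigma Q B Ez j) (w - z k j))%:E)%E)
         (z k.+1 j))
    (* step 5 *)
    /\ x k.+1 = x k + (tau * sigma) *: Gam p q F A G B c (u k.+1) (y k.+1) (v k.+1) (z k.+1)) ->
  forall k,
    is_argmin (fun uy : 'cV[R]_nu * bfam R ny =>
        (L uy.1 uy.2 (v k) (z k) (x k)
         + (sigma / 2 * qn (hatT sigma F A P Ey Tf p.-1)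
                            (stack (uy.1 - u k) (bsub uy.2 (y k)) p.-1)
            + sigma / 2 * qn (Tblk sigma P A Ey p.-1) (uy.2 p.-1 - y k p.-1))%:E)%E)
      (u k.+1, y k.+1)
    /\ is_argmin (fun vz : 'cV[R]_nv * bfam R nz =>
        (L (u k.+1) (y k.+1) vz.1 vz.2 (x k)
         + (sigma / 2 * qn (hatT sigma G B Q Ez Tg q.-1)
                            (stack (vz.1 - v k) (bsub vz.2 (z k)) q.-1)
            + sigma / 2 * qn (Tblk sigma Q B Ez q.-1) (vz.2 q.-1 - z k q.-1))%:E)%E)
      (v k.+1, z k.+1)
    /\ x k.+1 = x k + (tau * sigma) *: Gam p q F A G B c (u k.+1) (y k.+1) (v k.+1) (z k.+1).
Proof.
move=> hp hq; destruct p as [|p']; first done; destruct q as [|q']; first done.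
move=> hs htau [_ _ [fninf _]] [_ _ [gninf _]] hP hQ hEy hEz hTf hTg hf0 hg0 L Halg.
have fin : forall k, f (u k) \is a fin_num /\ g (v k) \is a fin_num.
  elim=> [|k [fk gk]].
    by rewrite !fin_numE fninf gninf /= !lt_eqF.
  have [_ [Su [_ [_ [Sv _]]]]] := Halg k.
  have fk1 : f (u k.+1) \is a fin_num.
    have := Su (u k); rewrite /L !LagU /Obj -!addeA => h.
    apply: (fin_of_le (fninf _) _ _ h).
      by rewrite !fin_numD gk.
    by rewrite !fin_numD fk gk.
  split=> //.
  have := Sv (v k); rewrite /L !LagV /Obj -!addeA (addeC (f _)) -!addeA => h.
  apply: (fin_of_le (gninf _) _ _ h).
    by rewrite !fin_numD fk1.
  by rewrite !fin_numD fk1 gk.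
move=> k.
have [fk gk] := fin k.
have [fk1 _] := fin k.+1.
have [S1 [Su [S2 [S3 [Sv [S4 Sx]]]]]] := Halg k.
split; last split => //.
- move=> uy.
  rewrite /L !LagU.
  apply: (half (ybar := ybar k) hs hEy) uy.
  + by move=> w; rewrite !adde_eq_ninfty (negbTE (fninf _)) (negbTE (gninf _)).
  + by rewrite !fin_numD fk gk.
  + by move=> j hj w; have := S1 j hj w; rewrite /L !LagU.
  + by move=> w; have := Su w; rewrite /L !LagU.
  + by move=> j hj w; have := S2 j hj w; rewrite /L !LagU.
- move=> vz.
  rewrite /L !LagV.
  apply: (half (ybar := zbar k) hs hEz) vz.
  + by move=> w; rewrite !adde_eq_ninfty (negbTE (fninf _)) (negbTE (gninf _)).
  + by rewrite !fin_numD fk1 gk.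
  + by move=> j hj w; have := S3 j hj w; rewrite /L !LagV.
  + by move=> w; have := Sv w; rewrite /L !LagV.
  + by move=> j hj w; have := S4 j hj w; rewrite /L !LagV.
Qed.
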